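(* Let $\Omega$ be an infinite set and let $0<k<j$ be integers. Then every graph automorphism of $\Gamma^\Omega_{j;k}$ is induced by a permutation of $\Omega$.
   Context: $\Gamma^\Omega_{j;k}$ is the graph whose vertices are the $j$-element subsets of $\Omega$, two being adjacent iff their intersection has exactly $k$ elements. *)

(* Defs.v *)
From mathcomp Require Import all_boot.
From mathcomp Require Import finmap.
Set Implicit Arguments. Unset Strict Implicit. Unset Printing Implicit Defensive.
Local Open Scope fset_scope.

(* Vertices of Gamma^Omega_{j;k}: the j-element (finite) subsets of Omega = T. *)
Definition jsubset (T : choiceType) (j : nat) : Type :=
  {A : {fset T} | #|` A| == j}.

Definition Gadj (T : choiceType) (j k : nat) (A B : jsubset T j) : bool :=
  #|` (val A `&` val B)| == k.

Definition is_graph_aut (T : choiceType) (j k : nat)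
  (f : jsubset T j -> jsubset T j) : Prop :=
  bijective f /\ forall A B, Gadj k (f A) (f B) = Gadj k A B.

Definition induced_by_perm (T : choiceType) (j : nat)
  (f : jsubset T j -> jsubset T j) : Prop :=
  exists sigma : T -> T, bijective sigma /\
    forall A : jsubset T j, val (f A) = [fset sigma x | x in val A].

Definition infinite_type (T : eqType) : Prop :=
  ~ exists s : seq T, forall x : T, x \in s.

(* Main.v *)
Require Import Defs.
From Stdlib Require Import Classical ClassicalEpsilon.
From mathcomp Require Import all_boot.
From mathcomp Require Import finmap zify.

Section Helpers.
Set Implicit Arguments. Unset Strict Implicit. Unset Printing Implicit Defensive.
Local Open Scope fset_scope.

Lemma fresh (T : choiceType) : infinite_type T ->
  forall X : {fset T}, exists x, x \notin X.
Proof.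
move=> Tinf X; apply: NNPP => H; apply: Tinf.
exists (enum_fset X) => x; case: (boolP (x \in X)) => // /negP Hx.
by exfalso; apply: H; exists x; apply/negP.
Qed.

Lemma extend (T : choiceType) (j : nat) : infinite_type T ->
  forall S X : {fset T}, #|` S| <= j ->
  exists D : {fset T}, [/\ S `<=` D, #|` D| = j & D `&` X `<=` S].
Proof.
move=> Tinf S X; move Hn: (j - #|` S|) => n.
elim: n S Hn => [|n IH] S Hn HS.
  exists S; split => //; last exact: fsubsetIl.
  by apply/eqP; rewrite eqn_leq HS /= -subn_eq0 Hn.
have [x Hx] := fresh Tinf (S `|` X).
have HxS : x \notin S by move: Hx; rewrite in_fsetU negb_or => /andP[].
have HxX : x \notin X by move: Hx; rewrite in_fsetU negb_or => /andP[].
have Hc : #|` x |` S| = #|` S|.+1 by rewrite cardfsU1 HxS.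
have [D [H1 H2 H3]] : exists D : {fset T}, [/\ x |` S `<=` D, #|` D| = j & D `&` X `<=` x |` S].
  apply: IH; rewrite Hc; first by rewrite subnS Hn.
  by rewrite ltnNge; apply/negP => Hj; move: Hn; rewrite (eqP (_ : j - #|` S| == 0)) // subn_eq0.
exists D; split => //.
  by apply: fsubset_trans H1; apply: fsubsetU1.
apply/fsubsetP => y Hy; have := fsubsetP H3 y Hy; rewrite in_fset1U => /orP[/eqP Hyx|//].
by move: Hy; rewrite in_fsetI Hyx (negbTE HxX) andbF.
Qed.

Lemma subext (T : choiceType) (m : nat) (A : {fset T}) :
  forall S : {fset T}, S `<=` A -> #|` S| <= m -> m <= #|` A| ->
  exists K : {fset T}, [/\ S `<=` K, K `<=` A & #|` K| = m].
Proof.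
move=> S; move Hn: (m - #|` S|) => n.
elim: n S Hn => [|n IH] S Hn HSA HS HmA.
  exists S; split => //; apply/eqP; rewrite eqn_leq HS /= -subn_eq0 Hn //.
have Hlt : #|` S| < m by rewrite ltnNge; apply/negP => Hj; move: Hn; rewrite (eqP (_ : m - #|` S| == 0)) // subn_eq0.
have [x HxA HxS] : exists2 x, x \in A & x \notin S.
  apply/fsubsetPn; apply/negP => HAS.
  by have := fsubset_leq_card HAS; rewrite leqNgt (leq_trans Hlt HmA).
have Hc : #|` x |` S| = #|` S|.+1 by rewrite cardfsU1 HxS.
have [K [H1 H2 H3]] : exists K : {fset T}, [/\ x |` S `<=` K, K `<=` A & #|` K| = m].
  apply: IH => //; rewrite ?Hc //; first by rewrite subnS Hn.
  by rewrite fsubUset fsub1set HxA HSA.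
exists K; split => //; by apply: fsubset_trans H1; apply: fsubsetU1.
Qed.


Lemma vsize (T : choiceType) j (A : jsubset T j) : #|` val A| = j.
Proof. exact: eqP (valP A). Qed.

Lemma Gadj_sym (T : choiceType) j k (A B : jsubset T j) : Gadj k A B = Gadj k B A.
Proof. by rewrite /Gadj fsetIC. Qed.

Lemma Gadj_irr (T : choiceType) j k (A : jsubset T j) : k != j -> Gadj k A A = false.
Proof. by move=> Hkj; rewrite /Gadj fsetIid vsize eq_sym (negbTE Hkj). Qed.

Lemma card_sub_eq (T : choiceType) (X Y : {fset T}) :
  X `<=` Y -> (#|` Y| <= #|` X|)%N -> X = Y.
Proof. by move=> H1 H2; apply/eqP; rewrite eqEfcard H1 H2. Qed.

Lemma cardI_ge (T : choiceType) k (X Y : {fset T}) : #|` X| = k ->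
  (k <= #|` X `&` Y|)%N = (X `<=` Y).
Proof.
move=> HX; apply/idP/idP => [Hk|/fsetIidPl ->]; last by rewrite HX.
have := card_sub_eq (fsubsetIl X Y); rewrite HX => /(_ Hk) <-.
exact: fsubsetIr.
Qed.

Lemma head_in (T : choiceType) (X : {fset T}) x0 : X != fset0 -> head x0 (enum_fset X) \in X.
Proof.
move=> /fset0Pn [x Hx]; move: Hx; rewrite -[x \in X]/(x \in enum_fset X).
rewrite -[head _ _ \in X]/(head x0 (enum_fset X) \in enum_fset X).
by case: (enum_fset X) => //= a l _; rewrite mem_head.
Qed.

Lemma pigeon (X Y : eqType) (phi : X -> Y) (m : nat) (r : seq Y) :
  forall s : seq X, (forall x, x \in s -> phi x \in r) ->
  (forall y, count (fun x => phi x == y) s <= m)%N -> (size s <= size r * m)%N.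
Proof.
elim: r => [|y r IH] s Hs Hc.
  by case: s Hs {Hc} => //= x s H; have := H x (mem_head _ _).
rewrite -(count_predC (fun x => phi x == y) s) /= mulSn leq_add //.
rewrite -size_filter; apply: IH.
  move=> x; rewrite mem_filter => /andP[Hne Hx].
  by have := Hs x Hx; rewrite in_cons (negbTE Hne).
move=> z; rewrite count_filter; apply: leq_trans (Hc z).
by apply: sub_count => x /andP[].
Qed.


Lemma petal (T : choiceType) j k (L : {fset T}) (c : seq (jsubset T j)) (E : jsubset T j) :
  #|` L| = k -> uniq c -> (j < size c)%N ->
  (forall D, D \in c -> L `<=` val D) ->
  (forall D D', D \in c -> D' \in c -> D != D' -> Gadj k D D') ->
  (forall D, D \in c -> Gadj k E D) -> L `<=` val E.
Proof.
move=> HL Hu Hsz HLD Hpw HE; apply: contraT => HLE.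
have [x0 _ _] := fsubsetPn _ _ HLE.
have HLEk : (#|` L `&` val E| < k)%N by rewrite ltnNge (cardI_ge _ HL) (negbTE HLE).
have Hne : forall D, D \in c -> (val E `&` val D) `\` L != fset0.
  move=> D HD; apply/negP => /eqP H0.
  have Hsub : val E `&` val D `<=` L `&` val E.
    rewrite fsubsetI fsubsetIl andbT; apply/fsubsetP => y Hy.
    apply: contraT => HyL.
    have : y \in (val E `&` val D) `\` L by rewrite in_fsetD HyL Hy.
    by rewrite H0.
  have := fsubset_leq_card Hsub; rewrite (eqP (HE D HD)) => Hk.
  by move: (leq_ltn_trans Hk HLEk); rewrite ltnn.
pose p (D : jsubset T j) := head x0 (enum_fset ((val E `&` val D) `\` L)).
have Hp : forall D, D \in c -> p D \in (val E `&` val D) `\` L.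
  by move=> D HD; apply: head_in; apply: Hne.
have Hinj : {in c &, injective p}.
  move=> D D' HD HD' Heq; apply: contraTeq isT => HDD.
  have HI : L = val D `&` val D'.
    apply: card_sub_eq; first by rewrite fsubsetI !HLD.
    by have := Hpw D D' HD HD' HDD; rewrite /Gadj => /eqP ->; rewrite HL.
  have := Hp D HD; rewrite in_fsetD in_fsetI => /andP[HnL /andP[_ HxD]].
  have := Hp D' HD'; rewrite -Heq in_fsetD in_fsetI => /andP[_ /andP[_ HxD']].
  by move: HnL; rewrite HI in_fsetI HxD HxD'.
have Hu2 : uniq (map p c) by rewrite map_inj_in_uniq.
have Hsub2 : {subset map p c <= enum_fset (val E)}.
  move=> y /mapP [D HD ->]; have := Hp D HD.
  by rewrite in_fsetD in_fsetI => /andP[_ /andP[H _]].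
have := uniq_leq_size Hu2 Hsub2; rewrite size_map vsize => Hle.
by move: (leq_trans Hsz Hle); rewrite ltnn.
Qed.


Definition mkv (T : choiceType) j (D : {fset T}) (H : #|` D| = j) : jsubset T j :=
  exist (fun A : {fset T} => #|` A| == j) D (introT eqP H).

Definition Pc (T : choiceType) j k N (A B C : jsubset T j) : Prop :=
  exists s : seq (jsubset T j), [/\ size s = N, uniq s,
    (forall D D', D \in s -> D' \in s -> D != D' -> Gadj k D D') &
    (forall D, D \in s -> [&& Gadj k A D, Gadj k B D & Gadj k C D])].

Lemma meetK (T : choiceType) (P Q X K : {fset T}) :
  K `<=` P -> K `<=` Q -> Q `<=` X -> P `&` X `<=` K -> P `&` Q = K.
Proof.
move=> KP KQ QX PXK; apply/eqP; rewrite eqEfsubset; apply/andP; split.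
  by apply: fsubset_trans PXK; apply: fsetIS.
by rewrite fsubsetI KP KQ.
Qed.

Lemma sunflower (T : choiceType) j k (Tinf : infinite_type T) (Hkj : (k < j)%N)
  (A B C : jsubset T j) (K : {fset T}) : #|` K| = k ->
  K `<=` val A -> K `<=` val B -> K `<=` val C -> forall n, Pc k n A B C.
Proof.
move=> HK KA KB KC n.
pose W := val A `|` val B `|` val C.
suff : exists s X, [/\ size s = n, uniq s,
    (forall D D', D \in s -> D' \in s -> D != D' -> Gadj k D D'),
    (forall D, D \in s -> [&& Gadj k A D, Gadj k B D, Gadj k C D, K `<=` val D & val D `<=` X]) &
    W `<=` X].
  move=> [s [X [H1 H2 H3 H4 H5]]]; exists s; split => // D HD.
  by have /and5P[-> -> -> _ _] := H4 D HD.
elim: n => [|n [s [X [H1 H2 H3 H4 H5]]]].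
  by exists [::], W; split => //; apply: fsubset_refl.
have HKj : (#|` K| <= j)%N by rewrite HK ltnW.
have [D0 [HKD0 HD0 HD0X]] := extend Tinf X HKj.
pose v := mkv HD0.
have Hvk : forall Q : {fset T}, K `<=` Q -> Q `<=` X -> #|` D0 `&` Q| == k.
  by move=> Q KQ QX; rewrite (meetK HKD0 KQ QX HD0X) HK.
have HWX : forall Q, Q `<=` W -> Q `<=` X by move=> Q HQ; apply: fsubset_trans H5.
have HvD : forall D, D \in s -> Gadj k v D.
  by move=> D HD; have /and5P[_ _ _ ? ?] := H4 D HD; apply: Hvk.
have Hnv : v \notin s.
  apply/negP => Hv; have := HvD v Hv.
  by rewrite Gadj_irr // neq_ltn Hkj.
exists (v :: s), (X `|` D0); split => //=.
- by rewrite H1.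
- by rewrite Hnv H2.
- move=> D D'; rewrite !in_cons => /orP[/eqP->|HD] /orP[/eqP->|HD'] Hne.
  + by rewrite eqxx in Hne.
  + exact: HvD.
  + by rewrite Gadj_sym; apply: HvD.
  + exact: H3.
- move=> D; rewrite in_cons => /orP[/eqP->|HD].
    have HAX : val A `<=` X by apply: HWX; rewrite /W -fsetUA fsubsetUl.
    have HBX : val B `<=` X.
      by apply: HWX; rewrite /W; apply: fsubset_trans (fsubsetUl _ _); apply: fsubsetUr.
    have HCX : val C `<=` X by apply: HWX; rewrite /W fsubsetUr.
    rewrite /Gadj /= !(fsetIC (val _) D0) !Hvk //=.
    by rewrite HKD0 fsubsetUr.
  have /and5P[-> -> -> -> HDX] := H4 D HD.
  by rewrite /= (fsubset_trans HDX) // fsubsetUl.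
- by apply: fsubset_trans H5 _; apply: fsubsetUl.
Qed.

Lemma TP (T : choiceType) j k (Tinf : infinite_type T) (Hkj : (k < j)%N)
  (A B C : jsubset T j) :
  (k <= #|` val A `&` val B `&` val C|)%N <-> Pc k (2 ^ j * j).+1 A B C.
Proof.
split.
  move=> Hk.
  have [K [_ HK1 HK2]] := subext (fsub0set _) (leq0n k) Hk.
  move: HK1; rewrite !fsubsetI => /andP[/andP[KA KB] KC].
  have := sunflower Tinf Hkj HK2 KA KB KC.
  by apply.
move=> [s [Hsz Hu Hpw Hadj]].
pose phi (D : jsubset T j) := val A `&` val D.
pose r := enum_fset (fpowerset (val A)).
have Hr : forall D, D \in s -> phi D \in r.
  by move=> D _; rewrite -[_ \in r]/(phi D \in fpowerset (val A)) fpowersetE fsubsetIl.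
have [L HL] : exists L, (j < count (fun D => phi D == L) s)%N.
  apply: NNPP => Hn.
  have := @pigeon _ _ phi j r s Hr.
  rewrite Hsz -[size r]/(#|` fpowerset (val A)|) card_fpowerset vsize ltnn.
  move=> H; suff Hall : forall y, (count (fun D => phi D == y) s <= j)%N by have := H Hall.
  move=> y; rewrite leqNgt; apply/negP => Hy; apply: Hn; by exists y.
pose c := filter (fun D => phi D == L) s.
have Hc : (j < size c)%N by rewrite size_filter.
have [D0 HD0] : exists D0, D0 \in c.
  by move: Hc; case: c => // D0 c' _; exists D0; rewrite mem_head.
have HcL : forall D, D \in c -> phi D = L /\ D \in s.
  by move=> D; rewrite mem_filter => /andP[/eqP ? ?].
have HLk : #|` L| = k.
  have [<- Hs] := HcL D0 HD0.
  by have /and3P[/eqP -> _ _] := Hadj D0 Hs.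
have HLD : forall D, D \in c -> L `<=` val D.
  by move=> D HD; have [<- _] := HcL D HD; apply: fsubsetIr.
have Hpwc : forall D D', D \in c -> D' \in c -> D != D' -> Gadj k D D'.
  move=> D D' HD HD'; apply: Hpw; [exact: (HcL D HD).2 | exact: (HcL D' HD').2].
have Huc : uniq c by apply: filter_uniq.
have LB : L `<=` val B.
  apply: (petal HLk Huc Hc HLD Hpwc) => D HD.
  by have /and3P[_ -> _] := Hadj D (HcL D HD).2.
have LC : L `<=` val C.
  apply: (petal HLk Huc Hc HLD Hpwc) => D HD.
  by have /and3P[_ _ ->] := Hadj D (HcL D HD).2.
have LA : L `<=` val A by have [<- _] := HcL D0 HD0; apply: fsubsetIl.
rewrite -HLk; apply: fsubset_leq_card; by rewrite !fsubsetI LA LB LC.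
Qed.


Lemma Pc_map (T : choiceType) j k N (f : jsubset T j -> jsubset T j) (A B C : jsubset T j) :
  injective f -> (forall X Y, Gadj k (f X) (f Y) = Gadj k X Y) ->
  Pc k N A B C -> Pc k N (f A) (f B) (f C).
Proof.
move=> finj fadj [s [H1 H2 H3 H4]]; exists (map f s); split.
- by rewrite size_map.
- by rewrite map_inj_uniq.
- move=> D D' /mapP[X HX ->] /mapP[Y HY ->] Hne; rewrite fadj; apply: H3 => //.
  by apply: contraNneq Hne => ->.
- by move=> D /mapP[X HX ->]; rewrite !fadj; apply: H4.
Qed.

Lemma aut_inv (T : choiceType) j k (f : jsubset T j -> jsubset T j) :
  is_graph_aut k f -> exists fi, [/\ cancel f fi, cancel fi f &
     is_graph_aut k fi].
Proof.
move=> [[fi H1 H2] Hadj]; exists fi; split => //; split.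
  by exists f.
by move=> A B; rewrite -Hadj !H2.
Qed.

Lemma core (T : choiceType) j k (Tinf : infinite_type T) (Hkj : (k < j)%N)
  (f : jsubset T j -> jsubset T j) : is_graph_aut k f ->
  forall K : jsubset T k, exists K' : jsubset T k,
    forall C : jsubset T j, (val K `<=` val C) = (val K' `<=` val (f C)).
Proof.
move=> Hf K.
have [fi [c1 c2 [_ Hfi]]] := aut_inv Hf.
have Hfa := Hf.2.
have HKj : (#|` val K| <= j)%N by rewrite vsize ltnW.
have [A0 [KA0 HA0 _]] := extend Tinf fset0 HKj.
have [B0 [KB0 HB0 HB0A]] := extend Tinf A0 HKj.
have HAB : A0 `&` B0 = val K.
  by rewrite fsetIC; apply: (meetK KB0 KA0 (fsubset_refl _) HB0A).
pose A := mkv HA0; pose B := mkv HB0.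
have HK' : #|` val (f A) `&` val (f B)| = k.
  by apply/eqP; rewrite -/(Gadj k (f A) (f B)) Hfa /Gadj /= HAB vsize.
exists (mkv HK') => C /=.
rewrite -(cardI_ge _ (vsize K)) -(cardI_ge _ HK') -HAB.
have -> : A0 = val A by []. have -> : B0 = val B by [].
apply/idP/idP.
  move/(TP Tinf Hkj) => HP; apply/(TP Tinf Hkj).
  by apply: Pc_map => //; apply: can_inj c1.
move/(TP Tinf Hkj) => HP; apply/(TP Tinf Hkj).
have := Pc_map (can_inj c2) Hfi HP; by rewrite !c1.
Qed.


Lemma star_half (T : choiceType) j k (Tinf : infinite_type T) (Hkj : (k < j)%N)
  (K K' : jsubset T k) :
  (forall C : jsubset T j, val K `<=` val C -> val K' `<=` val C) -> val K' `<=` val K.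
Proof.
move=> H.
have HKj : (#|` val K| <= j)%N by rewrite vsize ltnW.
have [C0 [KC0 HC0 HC0K']] := extend Tinf (val K') HKj.
have := H (mkv HC0) KC0 => /= K'C0.
apply: fsubset_trans HC0K'; by rewrite fsubsetI K'C0 fsubset_refl.
Qed.

Lemma star_det (T : choiceType) j k (Tinf : infinite_type T) (Hkj : (k < j)%N)
  (K K' : jsubset T k) :
  (forall C : jsubset T j, (val K `<=` val C) = (val K' `<=` val C)) -> K = K'.
Proof.
move=> H; apply: val_inj; apply: card_sub_eq; last by rewrite !vsize.
by apply: (star_half Tinf Hkj) => C; rewrite H.
Qed.

Lemma exists_g (T : choiceType) j k (Tinf : infinite_type T) (Hkj : (k < j)%N)
  (f : jsubset T j -> jsubset T j) : is_graph_aut k f ->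
  exists g : jsubset T k -> jsubset T k, bijective g /\
    forall K C, (val K `<=` val C) = (val (g K) `<=` val (f C)).
Proof.
move=> Hf.
have [fi [c1 c2 Hfi]] := aut_inv Hf.
pose g K := proj1_sig (constructive_indefinite_description _ (core Tinf Hkj Hf K)).
have Hg : forall K C, (val K `<=` val C) = (val (g K) `<=` val (f C)).
  by move=> K; exact: (proj2_sig (constructive_indefinite_description _ (core Tinf Hkj Hf K))).
pose gi K := proj1_sig (constructive_indefinite_description _ (core Tinf Hkj Hfi K)).
have Hgi : forall K C, (val K `<=` val C) = (val (gi K) `<=` val (fi C)).
  by move=> K; exact: (proj2_sig (constructive_indefinite_description _ (core Tinf Hkj Hfi K))).
exists g; split => //; exists gi.
  move=> K; apply: (star_det Tinf Hkj) => C.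
  by rewrite -{1}(c1 C) -Hgi -Hg.
move=> K; apply: (star_det Tinf Hkj) => C.
by rewrite -{1}(c2 C) -Hg -Hgi.
Qed.


Lemma final (T : choiceType) j k (Hk : (0 < k)%N) (Hkj : (k < j)%N)
  (f : jsubset T j -> jsubset T j) (g : jsubset T k -> jsubset T k) (s : T -> T) :
  (forall K C, (val K `<=` val C) = (val (g K) `<=` val (f C))) ->
  bijective s -> (forall K, val (g K) = [fset s x | x in val K]) ->
  induced_by_perm f.
Proof.
move=> Hg Hs Hsg; exists s; split => // A.
have sinj : injective s by apply: bij_inj.
have Hsub : [fset s x | x in val A] `<=` val (f A).
  apply/fsubsetP => y /imfsetP [x /= HxA ->].
  have H1 : [fset x] `<=` val A by rewrite fsub1set.
  have H2 : (#|` [fset x]| <= k)%N by rewrite cardfs1.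
  have H3 : (k <= #|` val A|)%N by rewrite vsize ltnW.
  have [K [HxK HKA HK]] := subext H1 H2 H3.
  have := Hg (mkv HK) A; rewrite /= HKA => /esym/fsubsetP; apply.
  rewrite Hsg /=; apply/imfsetP; exists x => //=; by rewrite -fsub1set.
apply/esym/card_sub_eq => //.
by rewrite card_imfset //= !vsize.
Qed.

Definition single (T : choiceType) (x : T) : jsubset T 1 := mkv (cardfs1 x).

Lemma one_elt (T : choiceType) (Y : jsubset T 1) x0 :
  val Y = [fset head x0 (enum_fset (val Y))].
Proof.
have /cardfs1P [y Hy] := valP Y.
have : head x0 (enum_fset (val Y)) \in val Y.
  by apply: head_in; rewrite Hy; apply/fset0Pn; exists y; rewrite in_fset1.
by rewrite {2}Hy in_fset1 => /eqP ->.
Qed.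

Lemma single_val (T : choiceType) (K : jsubset T 1) x0 :
  K = single (head x0 (enum_fset (val K))).
Proof. by apply: val_inj; rewrite /= -one_elt. Qed.

Lemma base (T : choiceType) (g : jsubset T 1 -> jsubset T 1) : bijective g ->
  exists s : T -> T, bijective s /\ forall K, val (g K) = [fset s x | x in val K].
Proof.
move=> [gi c1 c2].
pose s x := head x (enum_fset (val (g (single x)))).
pose t x := head x (enum_fset (val (gi (single x)))).
have Hs : forall x, g (single x) = single (s x) by move=> x; apply: single_val.
have Ht : forall x, gi (single x) = single (t x) by move=> x; apply: single_val.
have sgl_inj : injective (@single T).
  by move=> x y /(congr1 val) /= /fset1_inj.
exists s; split.
  exists t => x; apply: sgl_inj.
    by rewrite -Ht -Hs c1.
  by rewrite -Hs -Ht c2.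
move=> K; have /cardfs1P [y Hy] := valP K.
have -> : K = single y by apply: val_inj.
by rewrite Hs /= imfset_fset1.
Qed.


Definition Phi (T : choiceType) j k (K1 K2 : jsubset T k) : Prop :=
  K1 <> K2 /\ forall K3 : jsubset T k, K3 <> K1 ->
   (forall A : jsubset T j, val K1 `<=` val A -> val K2 `<=` val A -> val K3 `<=` val A) ->
   (forall A : jsubset T j, val K1 `<=` val A -> val K3 `<=` val A -> val K2 `<=` val A).

Lemma sub_eq_k (T : choiceType) k (K1 K3 : jsubset T k) : val K3 `<=` val K1 -> K3 = K1.
Proof. by move=> H; apply: val_inj; apply: card_sub_eq => //; rewrite !vsize. Qed.

Lemma Phi_of (T : choiceType) j k (Tinf : infinite_type T) (Hk : (0 < k)%N) (Hkj : (k < j)%N)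
  (K1 K2 : jsubset T k) : #|` val K1 `&` val K2| = k.-1 -> Phi j K1 K2.
Proof.
move=> HI.
pose U := val K1 `|` val K2.
have HU : #|` U| = k.+1.
  rewrite /U; have := cardfsUI (val K1) (val K2); rewrite HI !vsize; lia.
split.
  move=> E; move: HI; rewrite E fsetIid vsize; lia.
move=> K3 Hne H A HA1 HA3.
have HUj : (#|` U| <= j)%N by rewrite HU.
have K3U : val K3 `<=` U.
  apply: contraT => /fsubsetPn [y Hy3 HyU].
  have [C [UC HC HCy]] := extend Tinf [fset y] HUj.
  have := H (mkv HC); rewrite /=.
  have -> : val K1 `<=` C by apply: fsubset_trans UC; apply: fsubsetUl.
  have -> : val K2 `<=` C by apply: fsubset_trans UC; apply: fsubsetUr.
  move=> /(_ isT isT) /fsubsetP /(_ y Hy3) HyC.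
  have : y \in C `&` [fset y] by rewrite in_fsetI HyC in_fset1 eqxx.
  by move/(fsubsetP HCy); rewrite (negbTE HyU).
have H13 : val K1 `|` val K3 = U.
  apply: card_sub_eq; first by rewrite fsubUset fsubsetUl K3U.
  rewrite HU ltnNge; apply/negP => Hle.
  have E1 : val K1 = val K1 `|` val K3.
    by apply: card_sub_eq; [apply: fsubsetUl | rewrite vsize].
  apply: Hne; apply: sub_eq_k; rewrite E1; exact: fsubsetUr.
apply: fsubset_trans (fsubsetUr (val K1) _) _.
by rewrite -/U -H13 fsubUset HA1 HA3.
Qed.

Lemma Phi_to (T : choiceType) j k (Tinf : infinite_type T) (Hk : (0 < k)%N) (Hkj : (k < j)%N)
  (K1 K2 : jsubset T k) : Phi j K1 K2 -> #|` val K1 `&` val K2| = k.-1.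
Proof.
move=> [Hne H]; apply: NNPP => Hm.
have Hle : (#|` val K1 `&` val K2| < k)%N.
  have := fsubset_leq_card (fsubsetIr (val K1) (val K2)); rewrite vsize => H2.
  rewrite ltn_neqAle H2 andbT.
  apply/negP => /eqP E; apply: Hne; apply/esym/sub_eq_k.
  have <- : val K1 `&` val K2 = val K2.
    by apply: card_sub_eq; [apply: fsubsetIr | rewrite E vsize].
  exact: fsubsetIl.
have [y Hy2 Hy1] : exists2 y, y \in val K2 & y \notin val K1.
  apply/fsubsetPn; apply/negP => H21; apply: Hne; apply/esym/sub_eq_k => //.
have [z Hz2 Hzy1] : exists2 z, z \in val K2 & z \notin y |` val K1.
  apply/fsubsetPn; apply/negP => H21.
  have : val K2 `<=` y |` (val K1 `&` val K2).
    apply/fsubsetP => t Ht; have := fsubsetP H21 t Ht.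
    by rewrite !in_fset1U in_fsetI Ht andbT.
  move/fsubset_leq_card; rewrite cardfsU1 vsize => Hc.
  apply: Hm; move: Hc Hle; case: (y \in _); lia.
have [w Hw] : exists w, w \in val K1.
  by apply/fset0Pn; rewrite -cardfs_gt0 vsize.
pose K3s := y |` (val K1 `\ w).
have HK3 : #|` K3s| = k.
  rewrite /K3s cardfsU1 in_fsetD1 (negbTE Hy1) andbF /=.
  have := cardfsD1 w (val K1); rewrite Hw vsize => E; rewrite [RHS]E; by [].
have K3sub : K3s `<=` y |` val K1.
  apply/fsubsetP => t; rewrite !in_fset1U in_fsetD1 => /orP[->//|/andP[_ ->]]; by rewrite orbT.
have := H (mkv HK3); rewrite /=.
have Hne3 : mkv HK3 <> K1.
  move=> E; move: Hy1; rewrite -E /= /K3s in_fset1U eqxx //.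
move=> /(_ Hne3) HH.
have Hprem : forall A : jsubset T j, val K1 `<=` val A -> val K2 `<=` val A -> K3s `<=` val A.
  move=> A HA1 HA2; apply: fsubset_trans K3sub _.
  by rewrite fsubUset fsub1set HA1 (fsubsetP HA2 y Hy2).
have HUj : (#|` y |` val K1| <= j)%N by rewrite cardfsU1 Hy1 vsize.
have [C [UC HC HCz]] := extend Tinf [fset z] HUj.
have := HH Hprem (mkv HC); rewrite /=.
have -> : val K1 `<=` C by apply: fsubset_trans UC; apply: fsubsetU1.
have -> : K3s `<=` C by apply: fsubset_trans UC.
move=> /(_ isT isT) /fsubsetP /(_ z Hz2) HzC.
have : z \in C `&` [fset z] by rewrite in_fsetI HzC in_fset1 eqxx.
by move/(fsubsetP HCz); rewrite (negbTE Hzy1).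
Qed.


Lemma Phi_transport (T : choiceType) j k (f fi : jsubset T j -> jsubset T j)
  (g gi : jsubset T k -> jsubset T k) :
  cancel fi f -> cancel g gi -> cancel gi g ->
  (forall K C, (val K `<=` val C) = (val (g K) `<=` val (f C))) ->
  forall K1 K2, Phi j K1 K2 -> Phi j (g K1) (g K2).
Proof.
move=> cf cg cg' Hg K1 K2 [Hne H]; split.
  by move=> E; apply: Hne; rewrite -(cg K1) E cg.
move=> K3' Hne3 H3 A'; rewrite -(cf A') -(cg' K3') -!Hg.
apply: H.
  by move=> E; apply: Hne3; rewrite -E cg'.
move=> A HA1 HA2; rewrite Hg cg'; apply: H3; by rewrite -Hg.
Qed.

Theorem main (k : nat) : forall (T : choiceType) (j : nat),
  infinite_type T -> (0 < k)%N -> (k < j)%N ->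
  forall f : jsubset T j -> jsubset T j,
    is_graph_aut k f -> induced_by_perm f.
Proof.
elim: k => [|k IH] T j Tinf Hk Hkj f Hf //.
have [g [Hgb Hg]] := exists_g Tinf Hkj Hf.
suff [s [Hs Hsg]] : exists s : T -> T, bijective s /\
    forall K, val (g K) = [fset s x | x in val K].
  exact: (@final T j k.+1 Hk Hkj f g s Hg Hs Hsg).
destruct k as [|k].
  exact: base.
apply: (IH T k.+2 Tinf) => //.
split => // K1 K2.
have [fi [c1 c2 _]] := aut_inv Hf.
have [gi c1' c2'] := Hgb.
have Hgi : forall K C, (val K `<=` val C) = (val (gi K) `<=` val (fi C)).
  by move=> K C; rewrite -{1}(c2' K) -{1}(c2 C) -Hg.
rewrite /Gadj; apply/eqP/eqP => E.
  apply: (Phi_to (j := j)) => //.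
  rewrite -(c1' K1) -(c1' K2); apply: (Phi_transport c1 c2' c1' Hgi).
  exact: (Phi_of Tinf).
apply: (Phi_to (j := j)) => //.
apply: (Phi_transport c2 c1' c2' Hg).
exact: (Phi_of Tinf).
Qed.

End Helpers.

Theorem proposition4p3 (T : choiceType) (j k : nat) :
  infinite_type T -> (0 < k)%N -> (k < j)%N ->
  forall f : jsubset T j -> jsubset T j,
    is_graph_aut k f -> induced_by_perm f.
Proof.
move=> Tinf Hk Hkj f Hf; exact: (main Tinf Hk Hkj Hf).
Qed.
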